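(* Let $p$ be a prime. Every $p^\alpha$-periodic map $\mathbb{Z}\to\mathbb{Z}_{p^\beta}$ ($\alpha,\beta\ge1$) is described by a $\mathbb{Z}_{p^\beta}$-polyfract, i.e. $\mathbb{Z}_{p^\beta}\binom{X}{\mathbb{Z}_{p^\alpha}}=\mathbb{Z}_{p^\beta}^{\mathbb{Z}_{p^\alpha}}$. More generally, if $q_1,\dots,q_n\ge p$ are powers of $p$ and $B$ is a finite commutative $p$-group, then every map $\mathbb{Z}_{q_1}\times\cdots\times\mathbb{Z}_{q_n}\to B$ is polyfractal: $$B\binom{X_1,\dots,X_n}{\mathbb{Z}_{q_1}\times\cdots\times\mathbb{Z}_{q_n}}=B^{\mathbb{Z}_{q_1}\times\cdots\times\mathbb{Z}_{q_n}}.$$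
   Context: $\mathbb{Z}_r=\mathbb{Z}/r\mathbb{Z}$; $\binom{X}{\delta}=X(X-1)\cdots(X-\delta+1)/\delta!$, $\binom{X}{0}=1$. For a finitely generated commutative group $B$, a $B$-polyfract in $X_1,\dots,X_n$ is a formal finite sum $P=\sum_{\delta\in\mathbb{N}^n}P_\delta\prod_j\binom{X_j}{\delta_j}$ with $P_\delta\in B$, evaluated at $x\in\mathbb{Z}^n$ by $P(x)=\sum_\delta(\prod_j\binom{x_j}{\delta_j})P_\delta$. Polyfracts are identified with their evaluation maps (which is injective). $B\binom{X_1,\dots,X_n}{\mathbb{Z}_{q_1}\times\cdots\times\mathbb{Z}_{q_n}}$ is the set of $B$-polyfracts whose map on $\mathbb{Z}^n$ is $q_j$-periodic in the $j$-th variable, viewed as maps on $\mathbb{Z}_{q_1}\times\cdots\times\mathbb{Z}_{q_n}$. *)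

(* Defs.v *)
From HB Require Import structures.
From mathcomp Require Import all_boot all_order all_algebra all_fingroup.
Set Implicit Arguments. Unset Strict Implicit. Unset Printing Implicit Defensive.
Import Order.TTheory GRing.Theory Num.Theory.
Local Open Scope ring_scope.

(* binomz x d = x (x-1) ... (x-d+1) / d!  (computed in rat, this is an integer;
   binomz x 0 = 1).  numq extracts it as an int. *)
Definition binomq (x : int) (d : nat) : rat :=
  (\prod_(i < d) (x%:~R - i%:R)) / (d`!)%:R.
Definition binomz (x : int) (d : nat) : int := numq (binomq x d).

Definition polyfract1 (B : zmodType) (D : nat) (P : 'I_D -> B) (x : int) : B :=
  \sum_(d < D) P d *~ binomz x d.

Definition polyfract (B : zmodType) (n D : nat)
    (P : {ffun 'I_n -> 'I_D} -> B) (x : 'I_n -> int) : B :=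
  \sum_(delta : {ffun 'I_n -> 'I_D})
     P delta *~ (\prod_(j < n) binomz (x j) (delta j)).

(* Main.v *)
Require Import Defs.
From HB Require Import structures.
From mathcomp Require Import all_boot all_order all_algebra all_fingroup.
From mathcomp Require Import ring lra zify.
Import Order.TTheory GRing.Theory Num.Theory.
Local Open Scope ring_scope.

Lemma int_indP (P : int -> Prop) :
  P 0 -> (forall x, P x -> P (x + 1)) -> (forall x, P (x + 1) -> P x) -> forall x, P x.
Proof.
move=> P0 PS PP; case=> n.
  elim: n => // n IH; by rewrite -addn1 PoszD; apply: PS.
elim: n => [|n IH].
  by apply: PP; have -> : Negz 0 + 1 = 0 by [].
apply: PP; have -> : Negz n.+1 + 1 = Negz n by rewrite !NegzE -addn1 PoszD; ring.
exact: IH.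
Qed.

Lemma int_ind0 (V : zmodType) (F : int -> V) :
  F 0 = 0 -> (forall x, F (x + 1) = F x) -> forall x, F x = 0.
Proof.
move=> F0 FS; apply: int_indP => // x; first by rewrite FS.
by rewrite FS.
Qed.

Lemma binomqS x d : binomq (x + 1) d.+1 = binomq x d.+1 + binomq x d.
Proof.
rewrite /binomq big_ord_recl big_ord_recr /=.
have -> : \prod_(i < d) ((x + 1)%:~R - (bump 0 i)%:R) = \prod_(i < d) (x%:~R - i%:R) :> rat.
  apply: eq_bigr => i _; rewrite /bump /= add1n -addn1 natrD intrD; ring.
rewrite factS natrM.
have h1 : (d`!)%:R != 0 :> rat by rewrite pnatr_eq0 -lt0n fact_gt0.
have h2 : (d.+1)%:R != 0 :> rat by rewrite pnatr_eq0.
rewrite intrD; field; rewrite h1 /=; by move: h2; rewrite -addn1 natrD addrC.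
Qed.

Lemma binomq0 x : binomq x 0 = 1.
Proof. by rewrite /binomq big_ord0 fact0 divr1. Qed.

Lemma binomq0S d : binomq 0 d.+1 = 0.
Proof. by rewrite /binomq big_ord_recl /= subrr mul0r mul0r. Qed.

Lemma binomq_int x d : binomq x d = (binomz x d)%:~R.
Proof.
suff [z hz] : exists z : int, binomq x d = z%:~R by rewrite /binomz hz numq_int.
elim: d x => [|d IH] x; first by exists 1; rewrite binomq0.
apply: (@int_indP (fun y => exists z : int, binomq y d.+1 = z%:~R)) => [|y [z hz]|y [z hz]] {x}.
- by exists 0; rewrite binomq0S.
- have [w hw] := IH y; exists (z + w); by rewrite binomqS hz hw intrD.
- have [w hw] := IH y; exists (z - w); by rewrite intrB -hz binomqS hw addrK.
Qed.

Lemma binomzS x d : binomz (x + 1) d.+1 = binomz x d.+1 + binomz x d.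
Proof. by apply: (@intr_inj rat); rewrite intrD -!binomq_int binomqS. Qed.

Lemma binomz0 x : binomz x 0 = 1.
Proof. by apply: (@intr_inj rat); rewrite -binomq_int binomq0. Qed.

Lemma binomz0S d : binomz 0 d.+1 = 0.
Proof. by apply: (@intr_inj rat); rewrite -binomq_int binomq0S. Qed.

Definition Dif (V : zmodType) (g : int -> V) : int -> V := fun x => g (x + 1) - g x.
Arguments Dif {V}.

Lemma newton1 (V : zmodType) (N : nat) (g : int -> V) :
  (forall x, iter N (@Dif V) g x = 0) ->
  forall x, g x = \sum_(d < N) (iter d (@Dif V) g 0) *~ binomz x d.
Proof.
elim: N g => [|N IH] g hg x.
  by rewrite big_ord0; apply: hg.
have hD : forall y, Dif g y = \sum_(d < N) (iter d.+1 (@Dif V) g 0) *~ binomz y d.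
  move=> y; rewrite (IH (Dif g)) //; first by apply: eq_bigr => d _; rewrite iterSr.
  by move=> z; rewrite -iterSr hg.
apply/eqP; rewrite -subr_eq0; apply/eqP; move: x.
apply: int_ind0 => [|y].
  rewrite big_ord_recl /= binomz0 big1 ?addr0 ?subrr // => i _.
  by rewrite /bump /= binomz0S mulr0z.
rewrite !big_ord_recl /= !binomz0.
have : g (y + 1) - g y = \sum_(d < N) (iter d.+1 (@Dif V) g 0) *~ binomz y d by apply: hD.
have -> : \sum_(i < N) iter (bump 0 i) (@Dif V) g 0 *~ binomz (y + 1) (bump 0 i) =
   \sum_(i < N) iter i.+1 (@Dif V) g 0 *~ binomz y i.+1 +
   \sum_(i < N) iter i.+1 (@Dif V) g 0 *~ binomz y i.
  rewrite -big_split /=; apply: eq_bigr => i _; by rewrite /bump /= binomzS mulrzDr.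
move=> h; rewrite -h; apply/eqP; rewrite subr_eq; apply/eqP.
rewrite /bump /=. 
have -> : \sum_(i < N) iter (1 + i) (@Dif V) g 0 *~ binomz y (1 + i) = \sum_(i < N) iter i.+1 (@Dif V) g 0 *~ binomz y i.+1 by [].
move: (g (y+1)) (g y) (g 0 *~ 1) (\sum_(i < N) iter i.+1 Dif g 0 *~ binomz y i.+1) => a b c e.
by rewrite [c + (e + _)]addrA addrA subrK addrC subrK.
Qed.

Definition act (B : zmodType) (P : {poly int}) (g : int -> B) (x : int) : B :=
  \sum_(i < size P) g (x + i%:Z) *~ P`_i.
Arguments act {B}.

Section Act.
Variable B : zmodType.
Implicit Types (g : int -> B) (P Q : {poly int}).

Lemma act_widen N P g x : (size P <= N)%N ->
  act P g x = \sum_(i < N) g (x + i%:Z) *~ P`_i.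
Proof.
move=> hN; rewrite /act (big_ord_widen N (fun i => g (x + i%:Z) *~ P`_i)) //.
rewrite big_mkcond /=; apply: eq_bigr => i _; case: ifP => // /negbT.
by rewrite -leqNgt => h; rewrite nth_default // mulr0z.
Qed.

Lemma actD P Q g x : act (P + Q) g x = act P g x + act Q g x.
Proof.
set N := maxn (size P) (size Q).
rewrite (act_widen N (P + Q)) ?size_polyD // (act_widen N P) ?leq_maxl //.
rewrite (act_widen N Q) ?leq_maxr // -big_split /=.
by apply: eq_bigr => i _; rewrite coefD mulrzDr.
Qed.

Lemma actN P g x : act (- P) g x = - act P g x.
Proof.
rewrite /act size_polyN -sumrN; apply: eq_bigr => i _; by rewrite coefN mulrNz.
Qed.

Lemma actB P Q g x : act (P - Q) g x = act P g x - act Q g x.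
Proof. by rewrite actD actN. Qed.

Lemma act0 g x : act 0 g x = 0.
Proof. by rewrite /act size_poly0 big_ord0. Qed.

Lemma actMn P n g x : act (P *+ n) g x = act P g x *+ n.
Proof. elim: n => [|n IH]; by rewrite ?act0 // !mulrS actD IH. Qed.

Lemma act1 g x : act 1 g x = g x.
Proof. by rewrite /act size_poly1 big_ord1 coefC /= addr0. Qed.

Lemma act_XnM k P g x : act ('X^k * P) g x = act P g (x + k%:Z).
Proof.
rewrite (act_widen (k + size P)%N); last first.
  by apply: leq_trans (size_polyMleq _ _) _; rewrite size_polyXn.
rewrite big_split_ord /= big1 ?add0r => [|i _]; last first.
  by rewrite coefXnM ltn_ord mulr0z.
apply: eq_bigr => i _; rewrite coefXnM ltnNge leq_addr /= addKn.
by rewrite PoszD addrA.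
Qed.

Lemma act_per P g (Q : int) : (forall y, g (y + Q) = g y) ->
  forall x, act P g (x + Q) = act P g x.
Proof.
move=> hg x; apply: eq_bigr => i _; by rewrite addrAC hg.
Qed.

Lemma iter_act N g x : iter N Dif g x = act (('X - 1) ^+ N) g x.
Proof.
elim: N x => [|N IH] x; first by rewrite expr0 act1.
rewrite iterS /Dif !IH exprS mulrBl mul1r actB.
by have := act_XnM 1 (('X - 1) ^+ N) g x; rewrite expr1 => ->.
Qed.
End Act.

Lemma Fp_dvd (p : nat) (m : int) : prime p -> (m%:~R : 'F_p) = 0 -> (p%:Z %| m)%Z.
Proof.
move=> hp; have key : forall n : nat, (n%:R : 'F_p) = 0 -> (p %| n)%N.
  move=> n h; have := val_Fp_nat hp n; rewrite h /= => h2.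
  by rewrite /dvdn -h2.
case: m => n.
  by rewrite -pmulrn => /key; rewrite dvdzE.
rewrite NegzE intrN => /eqP; rewrite oppr_eq0 => /eqP; rewrite -pmulrn => /key.
by rewrite dvdzE.
Qed.

Lemma frob_int (p a : nat) : prime p ->
  exists R : {poly int}, ('X - 1) ^+ (p ^ a)%N = 'X^(p ^ a)%N - 1 + R *+ p.
Proof.
move=> hp.
set P := ('X - 1) ^+ (p ^ a)%N - ('X^(p ^ a)%N - 1) : {poly int}.
have hP : map_poly (intr : int -> 'F_p) P = 0.
  rewrite /P rmorphB /= rmorphXn rmorphB /= map_polyX rmorphB /= map_polyXn rmorph1.
  have hn : [pchar {poly 'F_p}].-nat (p ^ a)%N.
    rewrite pnatX; apply/orP; left.
    have hc : [pchar {poly 'F_p}] =i (p : nat_pred).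
      by move=> q; rewrite pchar_poly (pcharf_eq (pchar_Fp hp)).
    by rewrite (eq_pnat _ hc) pnat_id.
  by rewrite exprDn_pchar // exprNn_pchar // expr1n subrr.
have hd : forall i, (p%:Z %| P`_i)%Z.
  move=> i; apply: Fp_dvd => //; by rewrite -coef_map hP coef0.
exists (\poly_(i < size P) ((P`_i %/ p%:Z)%Z)).
have -> : \poly_(i < size P) ((P`_i %/ p%:Z)%Z) *+ p = P.
  apply/polyP => i; rewrite coefMn coef_poly; case: ifP => hi.
    by rewrite -mulr_natr natz (divzK (hd i)).
  by rewrite mul0rn nth_default // leqNgt hi.
by rewrite /P [RHS]addrC subrK.
Qed.

Lemma split_pow (R : comRingType) (Y C : R) n : exists T, (Y + C) ^+ n = Y * T + C ^+ n.
Proof.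
elim: n => [|n [T hT]]; first by exists 0; rewrite !expr0 mulr0 add0r.
exists (T * (Y + C) + C ^+ n); rewrite exprSr hT exprSr; ring.
Qed.

Lemma anni (B : zmodType) (p a b : nat) (g : int -> B) : prime p ->
  (forall z : B, z *+ (p ^ b) = 0) -> (forall y, g (y + (p ^ a)%N%:Z) = g y) ->
  forall x, iter ((p ^ a) * b)%N Dif g x = 0.
Proof.
move=> hp hB hg x.
rewrite iter_act exprM.
have [R ->] := @frob_int p a hp.
have [T ->] := @split_pow _ ('X^(p ^ a)%N - 1) (R *+ p) b.
rewrite actD mulrBl mul1r actB act_XnM act_per // subrr add0r.
by rewrite exprMn_n actMn hB.
Qed.

Lemma per_mod (V : zmodType) (g : int -> V) (Q : int) :
  (forall x, g (x + Q) = g x) -> forall x y, (x = y %[mod Q])%Z -> g x = g y.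
Proof.
move=> hg.
have hm : forall m x, g (x + m * Q) = g x.
  move=> m; apply: (@int_indP (fun m => forall x, g (x + m * Q) = g x)) => {m}.
  - by move=> x; rewrite mul0r addr0.
  - by move=> m IH x; rewrite mulrDl mul1r addrA hg IH.
  - move=> m IH x; rewrite -hg -addrA (_ : m * Q + Q = (m + 1) * Q) ?IH //.
    by rewrite mulrDl mul1r.
move=> x y /eqP; rewrite eqz_mod_dvd => /divzK h.
by rewrite -(hm ((x - y) %/ Q)%Z y) h addrC subrK.
Qed.

Lemma iter_ext (V : zmodType) (g g' : int -> V) :
  (forall t, g t = g' t) -> forall d x, iter d Dif g x = iter d Dif g' x.
Proof.
move=> h d; elim: d => [|d IH] x //=; by rewrite /Dif !IH.
Qed.

Section Multi.
Variables (B : zmodType) (Q D : nat).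
Hypothesis hann : forall g : int -> B, (forall y, g (y + Q%:Z) = g y) ->
  forall x, iter D Dif g x = 0.

Definition Per n (f : ('I_n -> int) -> B) :=
  forall x y : 'I_n -> int, (forall j, (x j = y j %[mod Q%:Z])%Z) -> f x = f y.

Arguments Per {n}.

Definition catv n (t : int) (y : 'I_n -> int) : 'I_n.+1 -> int :=
  fun i => if unlift ord0 i is Some j then y j else t.

Arguments catv {n}.

Definition joinf n (p : 'I_D * {ffun 'I_n -> 'I_D}) : {ffun 'I_n.+1 -> 'I_D} :=
  [ffun i => if unlift ord0 i is Some j then p.2 j else p.1].

Definition splitf n (d : {ffun 'I_n.+1 -> 'I_D}) : 'I_D * {ffun 'I_n -> 'I_D} :=
  (d ord0, [ffun j => d (lift ord0 j)]).

Arguments joinf {n}.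
Arguments splitf {n}.

Lemma joinfK n : cancel (@joinf n) (@splitf n).
Proof.
case=> d e; rewrite /splitf /joinf ffunE unlift_none; congr pair.
by apply/ffunP => j; rewrite !ffunE liftK.
Qed.

Lemma splitfK n : cancel (@splitf n) (@joinf n).
Proof.
move=> d; apply/ffunP => i; rewrite /splitf /joinf ffunE.
by case: unliftP => [j ->|->] //=; rewrite ffunE.
Qed.

Lemma multi n : forall f : ('I_n -> int) -> B, Per f ->
  {P : {ffun 'I_n -> 'I_D} -> B | forall x, f x = polyfract P x}.
Proof.
elim: n => [|n IH] f hf.
  exists (fun _ => f (fun _ => 0)) => x.
  rewrite /polyfract.
  under eq_bigr => d _ do rewrite big_ord0 mulr1z.
  rewrite sumr_const card_ffun !card_ord expn0 mulr1n.
  by apply: hf => -[].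
pose g (y : 'I_n -> int) (t : int) := f (catv t y).
pose h (d : 'I_D) (y : 'I_n -> int) := iter d Dif (g y) 0.
have hh : forall d, Per (h d).
  move=> d y y' hy; apply: iter_ext => t; apply: hf => i; rewrite /catv.
  by case: (unlift ord0 i).
pose P d := sval (IH (h d) (hh d)).
have hP : forall d y, h d y = polyfract (P d) y := fun d => svalP (IH (h d) (hh d)).
exists (fun e => P (e ord0) [ffun j => e (lift ord0 j)]) => x.
pose y j := x (lift ord0 j).
have -> : f x = g y (x ord0).
  apply: hf => i; rewrite /catv /y; by case: unliftP => [j ->|->]; rewrite ?liftK ?unlift_none.
rewrite (@newton1 _ D (g y) _ (x ord0)); last first.
  apply: hann => t; apply: hf => i; rewrite /catv; case: (unlift ord0 i) => //.
  exact: modzDr.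
rewrite /polyfract (reindex (@joinf n)); last by exists (@splitf n) => ?; rewrite ?joinfK ?splitfK.
rewrite -(pair_big xpredT xpredT (fun d e => P (joinf (d, e) ord0) [ffun j => joinf (d, e) (lift ord0 j)] *~
   (\prod_(j < n.+1) binomz (x j) (joinf (d, e) j)))) /=.
apply: eq_bigr => d _; rewrite -/(h d y) hP /polyfract mulrz_suml.
apply: eq_bigr => e _; rewrite big_ord_recl /joinf !ffunE unlift_none /=.
have -> : [ffun j => [ffun i => if unlift ord0 i is Some j0 then e j0 else d] (lift ord0 j)] = e.
  by apply/ffunP => j; rewrite !ffunE liftK.
rewrite -mulrzA mulrC; congr (_ *~ (_ * _)); apply: eq_bigr => j _.
by rewrite ffunE liftK.
Qed.
End Multi.

From mathcomp Require Import cyclic.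

Lemma card_exp (B : finZmodType) (z : B) : z *+ #|B| = 0.
Proof.
have := expg_cardG (in_setT z); rewrite cardsT; exact.
Qed.

Theorem part2 (p : nat) (hp : prime p) :
  (forall (n : nat) (q : 'I_n -> nat) (B : finZmodType),
     (forall j, exists k : nat, q j = (p ^ k)%N) ->
     (forall j, (p <= q j)%N) ->
     p.-nat #|B| ->
     forall f : ('I_n -> int) -> B,
       (forall x y : 'I_n -> int,
          (forall j, (x j = y j %[mod (q j)%:Z])%Z) -> f x = f y) ->
       exists (D : nat) (P : {ffun 'I_n -> 'I_D} -> B),
         forall x : 'I_n -> int, f x = polyfract P x).
Proof.
move=> n q B hq _ hB f hf.
have [b hb] := p_natP hB.
pose a := (\sum_(j < n) logn p (q j))%N.
have hqa : forall j, (q j %| p ^ a)%N.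
  move=> j; have [k hk] := hq j; rewrite hk.
  apply: dvdn_exp2l; rewrite /a (bigD1 j) //= hk pfactorK //; exact: leq_addr.
exists (p ^ a * b)%N.
have hann : forall g : int -> B, (forall y, g (y + (p ^ a)%N%:Z) = g y) ->
    forall x, iter (p ^ a * b)%N Dif g x = 0.
  move=> g hg; apply: anni => // z; by rewrite -hb card_exp.
have hper : @Per B (p ^ a)%N n f.
  move=> x y hxy; apply: hf => j; apply/eqP; rewrite eqz_mod_dvd.
  apply: (@dvdz_trans (p ^ a)%N%:Z); first by rewrite dvdzE; apply: hqa.
  by rewrite -eqz_mod_dvd; apply/eqP.
have [P hP] := @multi B (p ^ a)%N (p ^ a * b)%N hann n f hper.
by exists P.
Qed.

Theorem corollary3p7 (p : nat) (hp : prime p) :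
  (forall (alpha beta : nat), (1 <= alpha)%N -> (1 <= beta)%N ->
     forall f : int -> 'Z_(p ^ beta),
       (forall x : int, f (x + (p ^ alpha)%:Z) = f x) ->
       exists (D : nat) (P : 'I_D -> 'Z_(p ^ beta)),
         forall x : int, f x = polyfract1 P x) /\
  (forall (n : nat) (q : 'I_n -> nat) (B : finZmodType),
     (forall j, exists k : nat, q j = (p ^ k)%N) ->
     (forall j, (p <= q j)%N) ->
     p.-nat #|B| ->
     forall f : ('I_n -> int) -> B,
       (forall x y : 'I_n -> int,
          (forall j, (x j = y j %[mod (q j)%:Z])%Z) -> f x = f y) ->
       exists (D : nat) (P : {ffun 'I_n -> 'I_D} -> B),
         forall x : 'I_n -> int, f x = polyfract P x).
Proof.
split; last exact: part2.
move=> alpha beta ha hb f hf.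
have hp1 := prime_gt1 hp.
have hle : forall k, (1 <= k)%N -> (p <= p ^ k)%N.
  move=> k hk; rewrite -{1}(expn1 p); apply: leq_pexp2l => //; exact: ltnW.
have hQ : (1 < p ^ beta)%N by apply: leq_trans hp1 (hle _ hb).
have hB : p.-nat #|'Z_(p ^ beta)| by rewrite card_ord Zp_cast // pnatX pnat_id.
have hf' : forall x y : 'I_1 -> int,
    (forall j, (x j = y j %[mod ((fun _ => (p ^ alpha)%N) j)%:Z])%Z) ->
    f (x ord0) = f (y ord0).
  move=> x y h; have := h ord0; exact: (@per_mod _ f _ hf).
have [D [P hP]] := @part2 p hp 1 (fun _ => (p ^ alpha)%N) _
  (fun _ => ex_intro _ alpha erefl) (fun _ => hle _ ha) hB _ hf'.
exists D, (fun d => P [ffun _ => d]) => x.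
rewrite (hP (fun _ => x)) /polyfract /polyfract1.
rewrite (reindex (fun d : 'I_D => [ffun _ : 'I_1 => d])); last first.
  exists (fun e : {ffun 'I_1 -> 'I_D} => e ord0) => e; rewrite ?ffunE //.
  move=> _; apply/ffunP => i; by rewrite ffunE (ord1 i).
by under eq_bigr => d _ do rewrite big_ord1 ffunE.
Qed.
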